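(* Let $(X,\tau)$ be a fuzzifying topological space and let $\beta_P\in\Im(P(X))$ satisfy $\beta_P(A)\le\tau_P(A)$ for all $A\subseteq X$. Then $\beta_P$ is a pre-base of $\tau_P$ if and only if $\tau_P=\beta_P^{(\cup)}$, where $$\beta_P^{(\cup)}(A)=\bigvee\Big\{\bigwedge_{\lambda\in\Lambda}\beta_P(B_\lambda)\;:\;\{B_\lambda\}_{\lambda\in\Lambda}\subseteq P(X),\ \bigcup_{\lambda\in\Lambda}B_\lambda=A\Big\}.$$
   Context: $\Im(Y)$ denotes the set of fuzzy subsets $\mu:Y\to[0,1]$ of a set $Y$, and $P(X)$ the power set of $X$. A fuzzifying topology on $X$ is $\tau\in\Im(P(X))$ with $\tau(X)=1$, $\tau(A\cap B)\ge\min(\tau(A),\tau(B))$ and $\tau(\bigcup_\lambda A_\lambda)\ge\inf_\lambda\tau(A_\lambda)$. Its neighbourhood degrees are $N_x(A)=\sup_{x\in B\subseteq A}\tau(B)$, its closure is $Cl(A)(x)=1-N_x(X\setminus A)$, and for a fuzzy set $\mu\in\Im(X)$, $Int(\mu)(x)=\sup_{B\subseteq X,\,x\in B}\min(\tau(B),\inf_{y\in B}\mu(y))$. The fuzzifying pre-open sets are $\tau_P(A)=\inf_{x\in A}Int(Cl(A))(x)$, and the pre-neighbourhood degrees are $N^P_x(A)=\sup_{x\in B\subseteq A}\tau_P(B)$. A fuzzy family $\beta_P\in\Im(P(X))$ with $\beta_P\le\tau_P$ pointwise is called a pre-base of $\tau_P$ if for all $x\in X$ and $A\subseteq X$, $N^P_x(A)\le\sup_{x\in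 B\subseteq A}\beta_P(B)$. *)

(* Defs.v *)
From HB Require Import structures.
From mathcomp Require Import all_boot all_order all_algebra.
From mathcomp Require Import boolp classical_sets reals.
Set Implicit Arguments. Unset Strict Implicit. Unset Printing Implicit Defensive.
Import Order.TTheory GRing.Theory Num.Theory.
Local Open Scope classical_set_scope.
Local Open Scope ring_scope.

Section Fuzzy.
Variables (R : realType) (X : Type).

(* Supremum / infimum in the complete lattice [0,1]:
   sup of the empty family is 0, inf of the empty family is 1. *)
Definition sup01 (S : set R) : R := sup (S `|` [set 0]).
Definition inf01 (S : set R) : R := inf (S `|` [set 1]).

Definition fuzzifying_topology (tau : set X -> R) : Prop :=
  (forall A, 0 <= tau A <= 1) /\
  tau setT = 1 /\
  (forall A B, Order.min (tau A) (tau B) <= tau (A `&` B)) /\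
  (forall (I : Type) (A : I -> set X),
      inf01 [set tau (A i) | i in setT] <= tau (\bigcup_(i in setT) A i)).

Variable tau : set X -> R.

Definition nbhd (x : X) (A : set X) : R :=
  sup01 [set tau B | B in [set B | B x /\ B `<=` A]].

Definition fclosure (A : set X) (x : X) : R := 1 - nbhd x (~` A).

Definition finterior (mu : X -> R) (x : X) : R :=
  sup01 [set Order.min (tau B) (inf01 [set mu y | y in B]) | B in [set B | B x]].

Definition tauP (A : set X) : R :=
  inf01 [set finterior (fclosure A) x | x in A].

Definition pre_nbhd (x : X) (A : set X) : R :=
  sup01 [set tauP B | B in [set B | B x /\ B `<=` A]].

Definition pre_base (betaP : set X -> R) : Prop :=
  (forall A, betaP A <= tauP A) /\
  (forall x A, pre_nbhd x A <= sup01 [set betaP B | B in [set B | B x /\ B `<=` A]]).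

End Fuzzy.

Definition beta_union (R : realType) (X : Type) (beta : set X -> R) (A : set X) : R :=
  sup01 [set r | exists (I : Type) (B : I -> set X),
           \bigcup_(i in setT) B i = A /\ r = inf01 [set beta (B i) | i in setT]].

(* Main.v *)
Require Import Defs.
From HB Require Import structures.
From mathcomp Require Import all_boot all_order all_algebra.
From mathcomp Require Import boolp classical_sets reals.
From mathcomp Require Import lra.
Import Order.TTheory GRing.Theory Num.Theory.
Local Open Scope classical_set_scope.
Local Open Scope ring_scope.

Section L.
Variable R : realType.
Implicit Types S : set R.

Lemma sup01_ub S r : (forall s, S s -> s <= 1) -> S r -> r <= sup01 S.
Proof.
move=> H Sr; apply: ub_le_sup; last by left.
exists 1 => s [/H//|->]; exact: ler01.
Qed.

Lemma sup01_ge0 S : (forall s, S s -> s <= 1) -> 0 <= sup01 S.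
Proof.
move=> H; apply: ub_le_sup; last by right.
exists 1 => s [/H//|->]; exact: ler01.
Qed.

Lemma sup01_le S c : 0 <= c -> (forall s, S s -> s <= c) -> sup01 S <= c.
Proof.
move=> c0 H; apply: ge_sup; first by exists 0; right.
by move=> s [/H//|->].
Qed.

Lemma inf01_lb S r : (forall s, S s -> 0 <= s) -> S r -> inf01 S <= r.
Proof.
move=> H Sr; apply: ge_inf; last by left.
exists 0 => s [/H//|->]; exact: ler01.
Qed.

Lemma inf01_le1 S : (forall s, S s -> 0 <= s) -> inf01 S <= 1.
Proof.
move=> H; apply: ge_inf; last by right.
exists 0 => s [/H//|->]; exact: ler01.
Qed.

Lemma inf01_ge S c : c <= 1 -> (forall s, S s -> c <= s) -> c <= inf01 S.
Proof.
move=> c1 H; apply: lb_le_inf; first by exists 1; right.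
by move=> s [/H//|->].
Qed.

Variables (X : Type) (tau : set X -> R).
Hypothesis htau : forall A, 0 <= tau A <= 1.

Lemma nbhd_01 (x : X) (A : set X) : 0 <= nbhd tau x A <= 1.
Proof.
apply/andP; split.
  by apply: sup01_ge0 => _ [B _ <-]; case/andP: (htau B).
by apply: sup01_le => // _ [B _ <-]; case/andP: (htau B).
Qed.

Lemma fclosure_01 (A : set X) (x : X) : 0 <= Defs.fclosure tau A x <= 1.
Proof.
rewrite /Defs.fclosure; case/andP: (nbhd_01 x (~` A)) => h1 h2.
by rewrite subr_ge0 h2 /= lerBlDr lerDl.
Qed.

Lemma finterior_01 (mu : X -> R) (x : X) : 0 <= finterior tau mu x <= 1.
Proof.
have H : forall s, [set Order.min (tau B) (inf01 [set mu y | y in B]) | B in [set B | B x]] s -> s <= 1.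
  move=> _ [B _ <-]; rewrite ge_min; by case/andP: (htau B) => _ ->.
apply/andP; split; first exact: sup01_ge0.
exact: sup01_le.
Qed.

Lemma tauP_01 (A : set X) : 0 <= tauP tau A <= 1.
Proof.
apply/andP; split.
  by apply: inf01_ge => // _ [x _ <-]; case/andP: (finterior_01 (Defs.fclosure tau A) x).
by apply: inf01_le1 => _ [x _ <-]; case/andP: (finterior_01 (Defs.fclosure tau A) x).
Qed.

Lemma fclosure_mono (B A : set X) (y : X) : B `<=` A -> Defs.fclosure tau B y <= Defs.fclosure tau A y.
Proof.
move=> BA; rewrite /Defs.fclosure; apply: lerB (lexx _) _.
apply: sup01_le; first by case/andP: (nbhd_01 y (~` B)).
move=> _ [C [Cy CA] <-]; apply: sup01_ub.
  by move=> _ [D _ <-]; case/andP: (htau D).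
exists C => //; split => // z /CA nAz Bz; apply: nAz; exact: BA.
Qed.

Lemma finterior_mono (mu nu : X -> R) (x : X) : (forall y, 0 <= mu y) -> (forall y, mu y <= nu y) ->
  finterior tau mu x <= finterior tau nu x.
Proof.
move=> mu0 munu; apply: sup01_le; first by case/andP: (finterior_01 nu x).
move=> _ [C Cx <-]; apply: le_trans (_ : Order.min (tau C) (inf01 [set nu y | y in C]) <= _).
  apply: le_min2 => //.
  apply: inf01_ge.
    by apply: inf01_le1 => _ [y _ <-].
  move=> _ [y Cy <-]; apply: le_trans (munu y); apply: inf01_lb => //.
  by move=> _ [z _ <-].
  by exists y.
apply: sup01_ub; last by exists C.
move=> _ [D _ <-]; rewrite ge_min; by case/andP: (htau D) => _ ->.
Qed.

Lemma tauP_le_int (B : set X) (x : X) : B x -> tauP tau B <= finterior tau (Defs.fclosure tau B) x.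
Proof.
move=> Bx; apply: inf01_lb; last by exists x.
by move=> _ [y _ <-]; case/andP: (finterior_01 (Defs.fclosure tau B) y).
Qed.

Lemma tauP_union (I : Type) (f : I -> set X) r :
  (forall i, r <= tauP tau (f i)) -> r <= 1 ->
  r <= tauP tau (\bigcup_(i in setT) f i).
Proof.
move=> H r1; apply: inf01_ge => // _ [x [i _ fxi] <-].
apply: le_trans (H i) _; apply: le_trans (@tauP_le_int (f i) x fxi) _.
apply: finterior_mono.
  by move=> y; case/andP: (fclosure_01 (f i) y).
move=> y; apply: fclosure_mono => z fiz; by exists i.
Qed.
End L.

Theorem theorem2p1 (R : realType) (X : Type) (tau betaP : set X -> R) :
  fuzzifying_topology tau ->
  (forall A, 0 <= betaP A <= 1) ->
  (forall A, betaP A <= tauP tau A) ->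
  (pre_base tau betaP <-> tauP tau = beta_union betaP).
Proof.
move=> [htau _] hb01 hble.
have bge0 : forall A, 0 <= betaP A by move=> A; case/andP: (hb01 A).
have bub : forall A (s : R), [set r | exists (I : Type) (B : I -> set X),
           \bigcup_(i in setT) B i = A /\ r = inf01 [set betaP (B i) | i in setT]] s -> s <= 1.
  by move=> A _ [I [B [_ ->]]]; apply: inf01_le1 => _ [i _ <-].
have bu0 : forall A, 0 <= beta_union betaP A.
  by move=> A; apply: sup01_ge0; apply: bub.
split.
- move=> [_ hpre]; apply: funext => A; apply/eqP; rewrite eq_le; apply/andP; split.
  + apply/ler_addgt0Pr => e e0.
    have [tA0 tA1] : 0 <= tauP tau A /\ tauP tau A <= 1 by apply/andP; exact: tauP_01.
    have [t tE] : {t : R | t = tauP tau A - e} by exists (tauP tau A - e).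
    have [t0|t0] := leP t 0.
      have := bu0 A; lra.
    have hex : forall x : {x | A x}, exists B : set X,
        B (sval x) /\ B `<=` A /\ t < betaP B.
      move=> [x Ax] /=.
      have [//|nex] := pselect (exists B : set X, B x /\ B `<=` A /\ t < betaP B).
      exfalso.
      have h1 : tauP tau A <= pre_nbhd tau x A.
        apply: sup01_ub; last by exists A => //; split.
        by move=> _ [B _ <-]; case/andP: (@tauP_01 _ _ _ htau B).
      have h2 : sup01 [set betaP B | B in [set B | B x /\ B `<=` A]] <= t.
        apply: sup01_le; first exact: ltW.
        move=> _ [B [Bx BA] <-]; rewrite leNgt; apply/negP => hB.
        by apply: nex; exists B.
      have := le_trans h1 (le_trans (hpre x A) h2); lra.
    have [g hg] := choice hex.
    have hu : \bigcup_(i in setT) g i = A.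
      apply/seteqP; split.
        by move=> x [i _ gix]; case: (hg i) => _ [+ _]; apply.
      move=> x Ax; exists (exist _ x Ax) => //; by case: (hg (exist _ x Ax)).
    have ht : t <= inf01 [set betaP (g i) | i in setT].
      apply: inf01_ge; first by lra.
      by move=> _ [i _ <-]; case: (hg i) => _ [_ /ltW].
    have : inf01 [set betaP (g i) | i in setT] <= beta_union betaP A.
      apply: sup01_ub; first exact: bub.
      by exists {x | A x}, g.
    move=> h; have := le_trans ht h; lra.
  + apply: sup01_le; first by case/andP: (@tauP_01 _ _ _ htau A).
    move=> _ [I [f [<- ->]]]; apply: tauP_union => //.
      move=> i; apply: le_trans (hble (f i)).
      by apply: inf01_lb; [move=> _ [j _ <-] | exists i].
    by apply: inf01_le1 => _ [j _ <-].
- move=> heq; split => // x A.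
  have s0 : 0 <= sup01 [set betaP B | B in [set B | B x /\ B `<=` A]].
    by apply: sup01_ge0 => _ [B _ <-]; case/andP: (hb01 B).
  apply: sup01_le => // _ [B [Bx BA] <-]; rewrite heq.
  apply: sup01_le => // _ [I [f [hu ->]]].
  have : (\bigcup_(i in setT) f i) x by rewrite hu.
  case=> i _ fxi.
  apply: (@le_trans _ _ (betaP (f i))).
    by apply: inf01_lb; [move=> _ [j _ <-] | exists i].
  apply: sup01_ub; first by move=> _ [C _ <-]; case/andP: (hb01 C).
  exists (f i) => //; split => // y fy; apply: BA; rewrite -hu; by exists i.
Qed.
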